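(* Let $A_X$ be an irreducible spherical Artin group with cyclic abelianization (i.e. $X$ not of type $\mathbb{B}_m$, $\mathbb{F}_4$ or $\mathbb{I}_2(2k)$), let $0\ne\chi:A_X\to\mathbb{Z}$ be a character and $\mathbb{F}$ a field. Then $\chi(T_X^{X_v})\ne0$ in $\mathbb{F}[t^{\pm1}]$ for every $v\in X$.
   Context: For a finite set $X$ with labels, $A_X$ is the Artin group and $W_X$ its Coxeter group (add $v^2=1$); spherical means $W_X$ finite, irreducible means the graph on $X$ with edges of label $\ge3$ is connected. For $v\in X$, $X_v=X\setminus\{v\}$, and $W_X^{X_v}$ is the set of elements $w\in W_X$ of minimal word length $l(w)$ in their coset $wW_{X_v}$. For $w\in W_X$, its lift $a_w\in A_X$ is the element $v_1\cdots v_r$ for any reduced expression $w=v_1\cdots v_r$ (well defined). Define $\chi(T_X^{X_v})=\sum_{w\in W_X^{X_v}}(-1)^{l(w)}t^{\chi(a_w)}\in\mathbb{F}[t^{\pm1}]$. *)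

(* Defs.v *)
From HB Require Import structures.
From mathcomp Require Import all_boot all_order all_algebra.
From Stdlib Require Import Relation_Operators.
Set Implicit Arguments. Unset Strict Implicit. Unset Printing Implicit Defensive.
Import Order.TTheory GRing.Theory Num.Theory.
Local Open Scope ring_scope.

(* Labels: m : X -> X -> nat, with the convention m s t = 0 encoding the
   label infinity (no relation). *)
Definition coxeter_matrix (X : finType) (m : X -> X -> nat) : Prop :=
  (forall s, m s s = 1%N) /\ (forall s t, m s t = m t s) /\
  (forall s t, s != t -> m s t != 1%N).

Definition alt (X : Type) (s t : X) (n : nat) : seq X :=
  mkseq (fun i => if odd i then t else s) n.

Definition cox_rel (X : finType) (m : X -> X -> nat) (r r' : seq X) : Prop :=
  (exists s, r = [:: s; s] /\ r' = [::]) \/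
  (exists s t, m s t != 0%N /\ r = alt s t (m s t) /\ r' = alt t s (m s t)).

Definition cox_step (X : finType) (m : X -> X -> nat) (u w : seq X) : Prop :=
  exists a b r r', cox_rel m r r' /\ u = a ++ r ++ b /\ w = a ++ r' ++ b.

(* Two words represent the same element of W_X (congruence generated by the
   relations of the presentation; since generators are involutions the monoid
   presentation equals the group presentation). *)
Definition cox_eq (X : finType) (m : X -> X -> nat) : seq X -> seq X -> Prop :=
  clos_refl_sym_trans (seq X) (cox_step m).

Definition spherical (X : finType) (m : X -> X -> nat) : Prop :=
  exists L : seq (seq X), forall w : seq X, exists2 u, u \in L & cox_eq m w u.

Definition irreducible (X : finType) (m : X -> X -> nat) : Prop :=
  forall s t : X, connect (fun a b => (m a b == 0%N) || (3 <= m a b)%N) s t.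

Definition ab_relator (X : finType) (m : X -> X -> nat) (s t x : X) : int :=
  (count_mem x (alt s t (m s t)))%:Z - (count_mem x (alt t s (m s t)))%:Z.

(* The abelianization of A_X, i.e. Z^X modulo the abelianized relators, is
   cyclic. *)
Definition cyclic_abelianization (X : finType) (m : X -> X -> nat) : Prop :=
  exists g : X -> int, forall v : X -> int, exists (k : int) (c : X -> X -> int),
    forall x, v x = k * g x +
      \sum_(s : X) \sum_(t : X | m s t != 0%N) c s t * ab_relator m s t x.

(* A character chi : A_X -> Z, given by its values f on the generators:
   it must respect all Artin relations. *)
Definition artin_character (X : finType) (m : X -> X -> nat) (f : X -> int) : Prop :=
  forall s t, m s t != 0%N ->
    \sum_(x <- alt s t (m s t)) f x = \sum_(x <- alt t s (m s t)) f x.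

Definition chi_word (X : finType) (f : X -> int) (w : seq X) : int :=
  \sum_(x <- w) f x.

Definition reduced (X : finType) (m : X -> X -> nat) (w : seq X) : Prop :=
  forall u, cox_eq m w u -> (size w <= size u)%N.

(* The class of the reduced word w lies in W_X^{X_v}: it has minimal length in
   its coset w W_{X_v}, whose elements are the classes of w ++ u with u a word
   in X_v = X \ {v}. *)
Definition min_coset_rep (X : finType) (m : X -> X -> nat) (v : X) (w : seq X) : Prop :=
  reduced m w /\
  forall u z, all (fun x => x != v) u -> cox_eq m (w ++ u) z -> (size w <= size z)%N.

Definition min_coset_reps (X : finType) (m : X -> X -> nat) (v : X) (ws : seq (seq X)) : Prop :=
  (forall w, w \in ws -> min_coset_rep m v w) /\
  (forall i j, (i < size ws)%N -> (j < size ws)%N ->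
      cox_eq m (nth [::] ws i) (nth [::] ws j) -> i = j) /\
  (forall w, min_coset_rep m v w -> exists2 u, u \in ws & cox_eq m w u).

(* Laurent polynomials in F[t^{+-1}] are represented by their coefficient
   functions int -> F (finitely supported).  chi(T_X^{X_v}) =
   sum_{w} (-1)^{l(w)} t^{chi(a_w)}, with l(w) = size w for reduced w. *)
Definition chi_T (F : fieldType) (X : finType) (f : X -> int) (ws : seq (seq X)) : int -> F :=
  fun k => \sum_(w <- ws | chi_word f w == k) (-1) ^+ size w.

(* Main.v *)
Require Import Defs.
From mathcomp Require Import all_boot all_order all_algebra.
From mathcomp Require Import ring.
From Stdlib Require Import Relation_Operators.
Import GRing.Theory Num.Theory.
Local Open Scope ring_scope.

Lemma alt_cons (X : Type) (s t : X) n : alt s t n.+1 = s :: alt t s n.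
Proof.
rewrite /alt /mkseq /= (iotaDl 1 0) -map_comp; congr (_ :: _).
by apply: eq_map => i /=; case: (odd i).
Qed.

Lemma sum_alt (X : Type) (phi : X -> int) n : forall s t,
  \sum_(x <- alt s t n) phi x = (uphalf n)%:Z * phi s + (n./2)%:Z * phi t.
Proof.
elim: n => [|n IH] s t; first by rewrite /alt /= big_nil mul0r mul0r addr0.
rewrite alt_cons big_cons IH /= -[(n./2).+1]add1n PoszD.
by move: (Posz (uphalf n)) (Posz (n./2)) => a b; ring.
Qed.

Lemma diff_alt (X : Type) (phi : X -> int) n s t :
  \sum_(x <- alt s t n) phi x - \sum_(x <- alt t s n) phi x
  = (odd n)%:Z * (phi s - phi t).
Proof.
rewrite !sum_alt uphalf_half PoszD.
by move: (Posz (odd n)) (Posz (n./2)) => a b; ring.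
Qed.

Lemma sum_delta (X : finType) (phi : X -> int) (z : X) :
  \sum_x phi x * ((z == x) : nat)%:Z = phi z.
Proof.
rewrite (bigD1 z) //= eqxx mulr1 big1 ?addr0 // => x /negbTE.
by rewrite eq_sym => ->; rewrite mulr0.
Qed.

Lemma psi_count (X : finType) (phi : X -> int) (w : seq X) :
  \sum_x phi x * (count_mem x w)%:Z = \sum_(y <- w) phi y.
Proof.
elim: w => [|y w IH] /=.
  by rewrite big_nil big1 // => x _; rewrite mulr0.
rewrite big_cons -IH -sum_delta -big_split /=.
by apply: eq_bigr => x _; rewrite PoszD mulrDr.
Qed.

Lemma psi_rel (X : finType) (m : X -> X -> nat) (phi : X -> int) s t :
  \sum_x phi x * ab_relator m s t x = (odd (m s t))%:Z * (phi s - phi t).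
Proof.
rewrite -(@diff_alt _ phi (m s t) s t) -(@psi_count _ phi (alt s t _))
  -(@psi_count _ phi (alt t s _)) -sumrB; apply: eq_bigr => x _.
by rewrite /ab_relator mulrBr.
Qed.

Theorem lemma6p3 (X : finType) (m : X -> X -> nat) (F : fieldType) (f : X -> int)
  (v : X) (ws : seq (seq X)) :
  coxeter_matrix m -> spherical m -> irreducible m -> cyclic_abelianization m ->
  artin_character m f -> (exists x, f x != 0) ->
  min_coset_reps m v ws ->
  chi_T F f ws <> (fun _ => 0).
Proof.
move=> [_ [msym _]] _ _ [g cyc] art [x0 fx0] [wsrep [wsinj wscomp]] Hchi.
pose oddr := fun a b => odd (m a b).
have symo : connect_sym oddr.
  by apply: sym_connect_sym => a b; rewrite /oddr msym.
have fodd : forall s t, oddr s t -> f s = f t.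
  move=> s t ost; have := art s t.
  have nz : m s t != 0%N by move: ost; rewrite /oddr; case: (m s t).
  have ost' : odd (m s t) := ost.
  move/(_ nz)/eqP; rewrite -subr_eq0 (@diff_alt _ f (m s t) s t) ost' mul1r subr_eq0.
  by move/eqP.
have fconn : forall x y, connect oddr x y -> f x = f y.
  move=> x y /connectP [p pth ->] {y}.
  elim: p x pth => [|a p IH] x //= /andP [xa pa].
  by rewrite (fodd _ _ xa) IH.
pose phi (x : X) := fun y => ((connect oddr x y) : nat)%:Z.
have psi_e : forall z : X, exists k : int, forall x', phi x' z = k * \sum_y phi x' y * g y.
  move=> z; have [k [c H]] := cyc (fun y => ((z == y) : nat)%:Z).
  exists k => x'; rewrite -(@sum_delta _ (phi x') z).
  under eq_bigr => y _ do rewrite H mulrDr.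
  rewrite big_split /= [X in _ + X](_ : _ = 0) ?addr0; last first.
    under eq_bigr => y _ do rewrite big_distrr /=.
    rewrite exchange_big /=; apply: big1 => s _.
    under eq_bigr => y _ do rewrite big_distrr /=.
    rewrite exchange_big /=; apply: big1 => t _.
    under eq_bigr => y _ do rewrite mulrCA.
    rewrite -big_distrr /= (@psi_rel _ m (phi x') s t).
    case ost: (odd (m s t)); last by rewrite !mul0r mulr0.
    by rewrite /phi (same_connect1r symo ost) subrr !mulr0.
  under eq_bigr => y _ do rewrite mulrCA.
  by rewrite -big_distrr.
have allc : forall z, connect oddr x0 z.
  move=> z; apply/negPn/negP => nc.
  have [k Hk] := psi_e z; have [k0 Hk0] := psi_e x0.
  have H0 := Hk x0; have Hz := Hk z; have H1 := Hk0 x0.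
  move: H0 Hz H1; rewrite /phi !connect0 (negbTE nc) /=.
  move: (\sum_y _ * g y) (\sum_y (connect oddr z y : nat)%:Z * g y) => P0 Pz.
  move=> H0 Hz H1.
  have P0nz : P0 != 0 by apply/eqP => E; move: H1; rewrite E mulr0.
  have k0' : k = 0.
    by apply/eqP; move/esym/eqP: H0; rewrite mulf_eq0 (negbTE P0nz) orbF.
  by move: Hz; rewrite k0' mul0r.
have fc : forall z, f z = f x0 by move=> z; rewrite (fconn _ _ (allc z)).
have chiw : forall w, (chi_word f w == 0) = (w == [::]).
  move=> w; have -> : chi_word f w = f x0 *+ size w.
    rewrite /chi_word; elim: w => [|y w IH]; first by rewrite big_nil.
    by rewrite big_cons IH fc /= mulrS.
  rewrite mulrn_eq0 (negbTE fx0) orbF; by case: w.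
have uq : uniq ws.
  apply/(uniqP [::]) => i j Hi Hj E; apply: wsinj => //.
  by rewrite E; apply: rst_refl.
have nilin : [::] \in ws.
  have [|u uin equ] := wscomp [::].
    by split => // u _.
  have [ru _] := wsrep u uin.
  have := ru [::] (rst_sym _ _ _ _ equ); rewrite leqn0 => /nilP Eu.
  by rewrite -Eu.
have := congr1 (fun h => h 0) Hchi; rewrite /chi_T /=.
under eq_bigl => w do rewrite chiw.
rewrite -big_filter filter_pred1_uniq // big_seq1 expr0 => /eqP.
by rewrite oner_eq0.
Qed.
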